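(* Let $x_0\in\mathcal{M}_0$ and let $r>0$ with $r<\lambda(x)$. Then $u^{-1}\big(\mathcal{M}\cap\bar B(x,r)\big)$ is connected.
   Context: $E=\mathbb{R}^n$. $\mathcal{M}_0$ is a compact $d$-dimensional $\mathcal{C}^2$ manifold, $u:\mathcal{M}_0\to E$ an immersion, $\mathcal{M}=u(\mathcal{M}_0)$; $\mathcal{M}_0$ carries the metric induced by $u$, whose second fundamental form has operator norm at most $\rho>0$ everywhere. For $x_0,y_0\in\mathcal{M}_0$ write $x=u(x_0)$, $y=u(y_0)$ and $T_y\mathcal{M}=d_{y_0}u(T_{y_0}\mathcal{M}_0)$. Normal reach: $\Lambda(x_0)=\{y_0\in\mathcal{M}_0:\ y_0\neq x_0,\ x-y\perp T_y\mathcal{M}\}$ and $\lambda_0(x_0)=\inf_{y_0\in\Lambda(x_0)}\|x-y\|$; one writes $\lambda(x)$ for $\lambda_0(x_0)$ (if $x$ has several preimages, every preimage has normal reach $0$). $\bar B(x,r)$ is the closed Euclidean ball. *)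

(* Defs.v *)
From HB Require Import structures.
From mathcomp Require Import all_boot all_order all_algebra.
From mathcomp Require Import all_classical all_reals all_analysis.
Import Order.TTheory GRing.Theory Num.Theory.
Import numFieldNormedType.Exports.
Local Open Scope classical_set_scope.
Local Open Scope ring_scope.
Set Implicit Arguments.
Unset Strict Implicit.
Unset Printing Implicit Defensive.

(* Euclidean inner product and Euclidean norm on R^n = 'rV[R]_n
   (MathComp's built-in norm on matrices is the max norm, which only
   serves as the (equivalent) topology for derivatives). *)
Definition edot (R : realType) (n : nat) (a b : 'rV[R]_n) : R :=
  (a *m b^T) ord0 ord0.
Definition enorm (R : realType) (n : nat) (a : 'rV[R]_n) : R :=
  Num.sqrt (edot a a).

Definition cball (R : realType) (n : nat) (x : 'rV[R]_n) (r : R)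
  : set 'rV[R]_n := [set y | enorm (y - x) <= r].

Definition C2_on (R : realType) (d n : nat) (V : set 'rV[R]_d)
    (f : 'rV[R]_d -> 'rV[R]_n) : Prop :=
  (forall z, V z -> f @ z --> f z) /\
  (forall z v, V z -> derivable f z v) /\
  (forall z v w, V z -> derivable ('D_v f) z w) /\
  (forall z v w, V z -> 'D_w ('D_v f) @ z --> 'D_w ('D_v f) z).

Definition C2_atlas (R : realType) (d : nat) (M0 : topologicalType)
    (I : Type) (U : I -> set M0) (phi : I -> M0 -> 'rV[R]_d)
    (psi : I -> 'rV[R]_d -> M0) : Prop :=
  (forall i, open (U i)) /\
  (forall p, exists i, U i p) /\
  (forall i, open (phi i @` U i)) /\
  (forall i p, U i p -> psi i (phi i p) = p) /\
  (forall i p, U i p -> phi i @ p --> phi i p) /\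
  (forall i z, (phi i @` U i) z -> psi i @ z --> psi i z) /\
  (forall i j, C2_on (phi i @` (U i `&` U j)) (phi j \o psi i)).

Definition C2_immersion (R : realType) (d n : nat) (M0 : topologicalType)
    (I : Type) (U : I -> set M0) (phi : I -> M0 -> 'rV[R]_d)
    (psi : I -> 'rV[R]_d -> M0) (u : M0 -> 'rV[R]_n) : Prop :=
  forall i, C2_on (phi i @` U i) (u \o psi i) /\
    (forall z v, (phi i @` U i) z -> 'D_v (u \o psi i) z = 0 -> v = 0).

(* T_y M = d_{y0}u (T_{y0} M0), computed in any chart around y0. *)
Definition tangent (R : realType) (d n : nat) (M0 : topologicalType)
    (I : Type) (U : I -> set M0) (phi : I -> M0 -> 'rV[R]_d)
    (psi : I -> 'rV[R]_d -> M0) (u : M0 -> 'rV[R]_n) (y0 : M0)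
    : set 'rV[R]_n :=
  [set w | exists i v, U i y0 /\ w = 'D_v (u \o psi i) (phi i y0)].

(* The second fundamental form of the metric induced by u has operator
   norm <= rho: in a chart, II(v,w) is the normal component of
   D^2(u o psi)(v,w), and |v|_g = |D(u o psi) v|. *)
Definition sff_bounded (R : realType) (d n : nat) (M0 : topologicalType)
    (I : Type) (U : I -> set M0) (phi : I -> M0 -> 'rV[R]_d)
    (psi : I -> 'rV[R]_d -> M0) (u : M0 -> 'rV[R]_n) (rho : R) : Prop :=
  forall i p v w t, U i p ->
    (exists v', t = 'D_v' (u \o psi i) (phi i p)) ->
    (forall v', edot ('D_w ('D_v (u \o psi i)) (phi i p) - t)
                     ('D_v' (u \o psi i) (phi i p)) = 0) ->
    enorm ('D_w ('D_v (u \o psi i)) (phi i p) - t)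
      <= rho * enorm ('D_v (u \o psi i) (phi i p))
             * enorm ('D_w (u \o psi i) (phi i p)).

Definition Lambda (R : realType) (d n : nat) (M0 : topologicalType)
    (I : Type) (U : I -> set M0) (phi : I -> M0 -> 'rV[R]_d)
    (psi : I -> 'rV[R]_d -> M0) (u : M0 -> 'rV[R]_n) (x0 : M0) : set M0 :=
  [set y0 | y0 <> x0 /\
     forall w, tangent U phi psi u y0 w -> edot (u x0 - u y0) w = 0].

(* normal reach lambda_0(x0) = inf over Lambda(x0) of |x - y|  (+oo if empty) *)
Definition normal_reach (R : realType) (d n : nat) (M0 : topologicalType)
    (I : Type) (U : I -> set M0) (phi : I -> M0 -> 'rV[R]_d)
    (psi : I -> 'rV[R]_d -> M0) (u : M0 -> 'rV[R]_n) (x0 : M0) : \bar R :=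
  ereal_inf [set (enorm (u x0 - u y0))%:E | y0 in Lambda U phi psi u x0].

(* Main.v *)
Set Warnings "-all".
Require Import Defs.
From HB Require Import structures.
From mathcomp Require Import all_boot all_order all_algebra.
From mathcomp Require Import all_classical all_reals all_analysis.
From mathcomp Require Import ring lra.
Import Order.TTheory GRing.Theory Num.Theory.
Import numFieldNormedType.Exports.
Local Open Scope classical_set_scope.
Local Open Scope ring_scope.
Section S.
Variables (R : realType) (n : nat).
Implicit Types a b : 'rV[R]_n.
Lemma edotE a b : edot a b = \sum_(j < n) a ord0 j * b ord0 j.
Proof. by rewrite /edot mxE; apply: eq_bigr => j _; rewrite mxE. Qed.
Lemma edot_ge0 a : 0 <= edot a a.
Proof. by rewrite edotE; apply: sumr_ge0 => j _; rewrite -expr2 sqr_ge0. Qed.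
Lemma edotNl a b : edot (- a) b = - edot a b.
Proof. by rewrite !edotE -sumrN; apply: eq_bigr => j _; rewrite mxE mulNr. Qed.
Lemma enormN a : enorm (- a) = enorm a.
Proof.
rewrite /enorm !edotE; congr Num.sqrt; apply: eq_bigr => j _; rewrite mxE mulNr mulrN opprK //.
Qed.
Lemma edot_expand a b (t : R) :
  edot (a + t *: b) (a + t *: b) - edot a a = t * (2 * edot a b + t * edot b b).
Proof.
rewrite !edotE !mulr_sumr -big_split /= mulr_sumr -sumrB; apply: eq_bigr => j _.
rewrite !mxE; ring.
Qed.
Lemma cvg_edot (T : Type) (F : set_system T) (FF : Filter F) (f g : T -> 'rV[R]_n) a b :
  f @ F --> a -> g @ F --> b -> (fun x => edot (f x) (g x)) @ F --> edot a b.
Proof.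
move=> fa gb; rewrite edotE; under eq_fun do rewrite edotE.
apply: (@cvg_big _ _ +%R 0 xpredT) => //; first exact: add_continuous.
move=> j _; apply: cvgM.
  exact: (cvg_comp _ _ fa (@coord_continuous _ 1 n ord0 j a)).
exact: (cvg_comp _ _ gb (@coord_continuous _ 1 n ord0 j b)).
Qed.
Lemma enorm0 : enorm (0 : 'rV[R]_n) = 0.
Proof. by rewrite /enorm edotE big1 ?sqrtr0 // => j _; rewrite mxE mul0r. Qed.
End S.
Lemma cvg_subc (R : realType) n (T : Type) (F : set_system T) (FF : Filter F) (u : T -> 'rV[R]_n) (c a : 'rV[R]_n) :
  u @ F --> a -> (fun x => u x - c) @ F --> a - c.
Proof. by move=> h; apply: cvgB => //; exact: cvg_cst. Qed.
Lemma cont_enorm (R : realType) n (T : topologicalType) (u : T -> 'rV[R]_n) c :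
  continuous u -> continuous (fun q => enorm (u q - c)).
Proof.
move=> uc p.
have h1 : {for p, continuous (fun q => edot (u q - c) (u q - c))}.
  by apply: cvg_edot; apply: cvg_subc; apply: uc.
exact: (continuous_comp h1 (@sqrt_continuous R _)).
Qed.
Theorem lemma2p6 (R : realType) (d n : nat) (M0 : topologicalType)
    (I : Type) (U : I -> set M0) (phi : I -> M0 -> 'rV[R]_d)
    (psi : I -> 'rV[R]_d -> M0) (u : M0 -> 'rV[R]_n) (rho : R) :
  hausdorff_space M0 -> compact [set: M0] ->
  C2_atlas U phi psi -> C2_immersion U phi psi u ->
  0 < rho -> sff_bounded U phi psi u rho ->
  forall (x0 : M0) (r : R), 0 < r ->
    (r%:E < normal_reach U phi psi u x0)%E ->
    connected (u @^-1` cball (u x0) r).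
Proof.
move=> _ cM [oU [cov [oim [psiphi [phic [psic _]]]]]] imm _ _ x0 r r0 rlt.
have ucont : continuous u.
  move=> p; have [i Uip] := cov p.
  have nUi : nbhs p (U i) by apply: open_nbhs_nbhs; split.
  have Gc : {for phi i p, continuous (u \o psi i)}.
    by have [[+ _] _] := imm i; apply; exists p.
  have := continuous_comp (phic i p Uip) Gc.
  move=> H.
  suff: ((u \o psi i) \o phi i) @ p --> u p.
    apply: cvg_trans; apply: near_eq_cvg; near=> q.
    rewrite /= psiphi //; near: q; exact: nUi.
  have -> : u p = ((u \o psi i) \o phi i) p by rewrite /= psiphi.
  exact: H.
set g := fun q => enorm (u q - u x0).
have gcont : continuous g.
  exact: cont_enorm.
set S := u @^-1` cball (u x0) r.
have Sg : S = g @^-1` [set t | t <= r] by [].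
have cS : closed S by rewrite Sg; apply: preimage_closed => //; exact: closed_le.
have key : forall D C1 C2, D !=set0 -> open C1 -> D = S `&` C1 ->
    closed C2 -> D = S `&` C2 -> ~ D x0 -> False.
  move=> D C1 C2 D0 oC1 DC1 cC2 DC2 nDx0.
  have cD : closed D by rewrite DC2; exact: closedI.
  have kD : compact D by apply: (subclosed_compact cD cM).
  have [b0 /set_mem Db0 bmin] := compact_EVT_min D0 kD (continuous_subspaceT gcont).
  have [Sb0 C1b0] : S b0 /\ C1 b0 by move: Db0; rewrite DC1.
  have b0ne : b0 <> x0 by move=> e; apply: nDx0; rewrite -e.
  have gmin : forall q, C1 q -> g b0 <= g q.
    move=> q C1q; have [gqr|rgq] := leP (g q) r.
      by apply: bmin; rewrite inE DC1.
    by apply: ltW; apply: le_lt_trans rgq; exact: Sb0.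
  have Lb0 : Lambda U phi psi u x0 b0.
    split => // w [i [v [Uib0 ->]]].
    set G := u \o psi i. set z0 := phi i b0.
    have z0im : (phi i @` U i) z0 by exists b0.
    have Gz0 : G z0 = u b0 by rewrite /G /z0 /= psiphi.
    have [[_ [Gder _]] _] := imm i.
    have dG : derivable G z0 v := Gder z0 v z0im.
    set D' := 'D_v G z0.
    set q := fun h : R => h^-1 *: ((G \o shift z0) (h *: v) - G z0).
    have qcvg : q @ 0^' --> D' := dG.
    set w0 := u b0 - u x0.
    set k := fun h : R => 2 * edot w0 (q h) + h * edot (q h) (q h).
    have kcvg : k @ 0^' --> 2 * edot w0 D' + 0 * edot D' D'.
      apply: cvgD; apply: cvgM.
      - exact: cvg_cst.
      - by apply: cvg_edot => //; exact: cvg_cst.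
      - exact: cvg_within.
      - exact: cvg_edot.
    have psinear : \forall z \near z0, C1 (psi i z).
      apply: (psic i z0 z0im); rewrite /z0 psiphi //.
      by apply: open_nbhs_nbhs; split => //; rewrite -(psiphi Uib0).
    have linc : (fun h : R => h *: v + z0) @ 0 --> z0.
      rewrite -{2}[z0]add0r -[X in X + z0](scale0r v).
      apply: cvgD; last exact: cvg_cst.
      apply: cvgZ; [exact: cvg_id | exact: cvg_cst].
    have hnear : \forall h \near (0:R), C1 (psi i (h *: v + z0)) := linc _ psinear.
    have hk : \forall h \near (0:R), h != 0 -> 0 <= h * k h.
      near=> h => h0.
      have C1h : C1 (psi i (h *: v + z0)) by near: h.
      have e : w0 + h *: q h = u (psi i (h *: v + z0)) - u x0.
        by rewrite /q scalerA mulfV // scale1r Gz0 /w0 addrC addrA subrK.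
      rewrite /k -edot_expand e subr_ge0 -ler_sqrt ?edot_ge0 //.
      exact: gmin.
    have kR : k @ at_right 0 --> 2 * edot w0 D' + 0 * edot D' D'.
      apply: cvg_trans kcvg; apply: cvg_app.
      move=> A [e egt0 Ae]; exists e => // x xe xgt0; apply: Ae => //.
      exact/lt0r_neq0.
    have kL : k @ at_left 0 --> 2 * edot w0 D' + 0 * edot D' D'.
      apply: cvg_trans kcvg; apply: cvg_app.
      move=> A [e egt0 Ae]; exists e => // x xe xlt0; apply: Ae => //.
      exact/ltr0_neq0.
    have geR : 0 <= 2 * edot w0 D' + 0 * edot D' D'.
      have cg : closed [set x : R | 0 <= x] := @closed_ge R 0.
      apply: (closed_cvg [set x : R | 0 <= x] cg _ _ kR).

      apply: filterS hk => h H hpos.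
      by rewrite /= -(pmulr_rge0 _ hpos); apply: H; rewrite gt_eqF.
    have leL : 2 * edot w0 D' + 0 * edot D' D' <= 0.
      have cl : closed [set x : R | x <= 0] := @closed_le R 0.
      apply: (closed_cvg [set x : R | x <= 0] cl _ _ kL).
      apply: filterS hk => h H hneg.
      by rewrite /= -(nmulr_rge0 _ hneg); apply: H; rewrite lt_eqF.
    have e0 : edot w0 D' = 0.
      have : 2 * edot w0 D' + 0 * edot D' D' = 0 by apply/eqP; rewrite eq_le leL geR.
      by rewrite mul0r addr0 => /eqP; rewrite mulf_eq0 pnatr_eq0 /= => /eqP.
    by rewrite -opprB edotNl e0 oppr0.

  have : (normal_reach U phi psi u x0 <= (enorm (u x0 - u b0))%:E)%E.
    by apply: ereal_inf_lbound; exists b0.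
  rewrite -opprB enormN => le; have := lt_le_trans rlt le; rewrite lte_fin.
  by apply/negP; rewrite -leNgt; exact: Sb0.
move=> B B0 [C1 oC1 BC1] [C2 cC2 BC2].
have Sx0 : S x0 by rewrite /S /cball /= subrr enorm0 ltW.
have BS : B `<=` S by rewrite BC1 => q [].
apply: contrapT => BneS.
have [Bx0|nBx0] := pselect (B x0); last exact: (key B C1 C2 B0 oC1 BC1 cC2 BC2 nBx0).
apply: (key (S `\` B) (~` C2) (~` C1)).
- apply: contrapT => /set0P/negP; rewrite negbK => /eqP e; apply: BneS.
  apply/seteqP; split => // q Sq; apply: contrapT => nBq.
  by have : (S `\` B) q by []; rewrite e.
- by rewrite openC.
- rewrite BC2; apply/seteqP; split => q /=.
    by move=> [Sq nq]; split => // C2q; apply: nq.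
  by move=> [Sq nC2q]; split => // -[_ ?].
- by rewrite closedC.
- rewrite BC1; apply/seteqP; split => q /=.
    by move=> [Sq nq]; split => // C1q; apply: nq.
  by move=> [Sq nC1q]; split => // -[_ ?].
- by move=> [_]; apply.
Unshelve. all: by end_near. Qed.
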